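(* A set of observables $A^1,\dots,A^m$ on $\mathbb C^d$ is informationally complete for pure states if and only if the composite physical imposition operator has no bifurcations in its physical fixed points, i.e. if and only if the number of rays contained in $\Gamma_{A^1\cdots A^m\Phi}$ is the same for every unit vector (generator state) $\Phi\in\mathbb C^d$.
   Context: States are unit vectors of $\mathbb C^d$; each observable $A^j$ is non-degenerate, identified with its orthonormal eigenbasis $\{\varphi^j_k\}_{k=0}^{d-1}$. Informationally complete (for pure states): whenever unit $\Phi,\Psi$ satisfy $|\langle\varphi^j_k,\Phi\rangle|=|\langle\varphi^j_k,\Psi\rangle|$ for all $j,k$, then $\Psi=e^{i\alpha}\Phi$. Physical imposition operator: $T_{A\Phi}\Psi=\sum_{k}|\langle\varphi_k,\Phi\rangle|\,u_k(\Psi)\,\varphi_k$, with $u_k(\Psi)=\langle\varphi_k,\Psi\rangle/|\langle\varphi_k,\Psi\rangle|$ if nonzero and $1$ otherwise. $\Gamma_{A\Phi}=\{\Psi\text{ unit}:T_{A\Phi}\Psi=\Psi\}$, $\Gamma_{A^1\cdots A^m\Phi}=\bigcap_j\Gamma_{A^j\Phi}$ (a union of rays $\{e^{i\alpha}\Psi\}$); a bifurcation means a change of the number of such rays as the generator state $\Phi$ varies. *)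

(* Defs.v *)
(* The field of complex numbers is modelled by an arbitrary
   numClosedFieldType C (algebraically closed field with conjugation and norm). *)
From HB Require Import structures.
From mathcomp Require Import all_boot all_order all_algebra.
Set Implicit Arguments. Unset Strict Implicit. Unset Printing Implicit Defensive.
Import Order.TTheory GRing.Theory Num.Theory.
Local Open Scope ring_scope.

Section QDefs.
Variable C : numClosedFieldType.
Variable d : nat.

Definition inner (u v : 'cV[C]_d) : C := \sum_(i < d) (u i 0)^* * v i 0.

Definition unit_vec (v : 'cV[C]_d) : Prop := inner v v = 1.

(* an observable = its orthonormal eigenbasis phi_0 .. phi_{d-1} *)
Definition onbasis (phi : 'I_d -> 'cV[C]_d) : Prop :=
  forall k l : 'I_d, inner (phi k) (phi l) = (k == l)%:R.

Definition phase (z : C) : C := if z == 0 then 1 else z / `|z|.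

Definition impose (phi : 'I_d -> 'cV[C]_d) (Phi Psi : 'cV[C]_d) : 'cV[C]_d :=
  \sum_(k < d) (`|inner (phi k) Phi| * phase (inner (phi k) Psi)) *: phi k.

Definition Gamma (m : nat) (A : 'I_m -> 'I_d -> 'cV[C]_d) (Phi Psi : 'cV[C]_d) : Prop :=
  unit_vec Psi /\ forall j : 'I_m, impose (A j) Phi Psi = Psi.

Definition same_ray (Psi Psi' : 'cV[C]_d) : Prop :=
  exists c : C, `|c| = 1 /\ Psi' = c *: Psi.

Definition info_complete (m : nat) (A : 'I_m -> 'I_d -> 'cV[C]_d) : Prop :=
  forall Phi Psi : 'cV[C]_d, unit_vec Phi -> unit_vec Psi ->
    (forall (j : 'I_m) (k : 'I_d), `|inner (A j k) Phi| = `|inner (A j k) Psi|) ->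
    same_ray Phi Psi.

(* The sets of rays contained in S1 and S2 have the same cardinality:
   f induces a bijection between the ray-quotients of S1 and S2. *)
Definition same_num_rays (S1 S2 : 'cV[C]_d -> Prop) : Prop :=
  exists f : 'cV[C]_d -> 'cV[C]_d,
    (forall x, S1 x -> S2 (f x)) /\
    (forall x y, S1 x -> S1 y -> (same_ray x y <-> same_ray (f x) (f y))) /\
    (forall y, S2 y -> exists x, S1 x /\ same_ray (f x) y).

Definition no_bifurcation (m : nat) (A : 'I_m -> 'I_d -> 'cV[C]_d) : Prop :=
  forall Phi Phi' : 'cV[C]_d, unit_vec Phi -> unit_vec Phi' ->
    same_num_rays (Gamma A Phi) (Gamma A Phi').
End QDefs.

(* Main.v *)
Require Import Defs.
From HB Require Import structures.
From mathcomp Require Import all_boot all_order all_algebra.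
Import Order.TTheory GRing.Theory Num.Theory.
Local Open Scope ring_scope.
Set Implicit Arguments. Unset Strict Implicit.

Section Aux.
Variable C : numClosedFieldType.
Variable d : nat.

Lemma expand (phi : 'I_d -> 'cV[C]_d) : onbasis phi ->
  forall v, v = \sum_(k < d) (inner (phi k) v) *: phi k.
Proof.
move=> h v.
pose M := \matrix_(i < d, k < d) phi k i 0.
pose N := \matrix_(k < d, i < d) (phi k i 0)^*.
have NM : N *m M = 1%:M.
  apply/matrixP => k l; rewrite !mxE -h /inner; apply: eq_bigr => i _.
  by rewrite !mxE.
have MN := mulmx1C NM.
apply/matrixP => i j; rewrite (ord1 j) {j}.
have := congr1 (fun X => (X *m v) i 0) MN.
rewrite mul1mx -mulmxA => <-.
rewrite summxE !mxE; apply: eq_bigr => k _.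
rewrite !mxE mulrC /inner; congr (_ * _).
by apply: eq_bigr => l _; rewrite !mxE.
Qed.

Lemma inner_sum (u : 'cV[C]_d) (F : 'I_d -> C) (w : 'I_d -> 'cV[C]_d) :
  inner u (\sum_(k < d) F k *: w k) = \sum_(k < d) F k * inner u (w k).
Proof.
rewrite /inner.
under eq_bigr => i _ do rewrite summxE mulr_sumr.
rewrite exchange_big /=; apply: eq_bigr => k _.
rewrite mulr_sumr; apply: eq_bigr => i _.
by rewrite mxE mulrCA.
Qed.

Lemma inner_basis_sum (phi : 'I_d -> 'cV[C]_d) (F : 'I_d -> C) l :
  onbasis phi -> inner (phi l) (\sum_(k < d) F k *: phi k) = F l.
Proof.
move=> h; rewrite inner_sum (bigD1 l) //= h eqxx mulr1 big1 ?addr0 //.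
by move=> k /negbTE kl; rewrite h eq_sym kl mulr0.
Qed.

Lemma norm_phase (z : C) : `|phase z| = 1.
Proof.
rewrite /phase; case: eqP => [_|/eqP nz]; first by rewrite normr1.
by rewrite normrM normfV normr_id divff // normr_eq0.
Qed.

Lemma norm_phase_mul (z : C) : `|z| * phase z = z.
Proof.
rewrite /phase; case: eqP => [->|/eqP nz]; first by rewrite normr0 mul0r.
by rewrite mulrC divfK // normr_eq0.
Qed.

Lemma impose_self (phi : 'I_d -> 'cV[C]_d) Phi :
  onbasis phi -> impose phi Phi Phi = Phi.
Proof.
move=> h; rewrite /impose [RHS](expand h); apply: eq_bigr => k _.
by rewrite norm_phase_mul.
Qed.

Lemma impose_fix_mod (phi : 'I_d -> 'cV[C]_d) Phi Psi :
  onbasis phi -> impose phi Phi Psi = Psi ->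
  forall k, `|inner (phi k) Phi| = `|inner (phi k) Psi|.
Proof.
move=> h e k.
have := congr1 (inner (phi k)) e.
rewrite /impose inner_basis_sum // => <-.
by rewrite normrM norm_phase mulr1 normr_id.
Qed.

Lemma impose_mod_fix (phi : 'I_d -> 'cV[C]_d) Phi Psi :
  onbasis phi -> (forall k, `|inner (phi k) Phi| = `|inner (phi k) Psi|) ->
  impose phi Phi Psi = Psi.
Proof.
move=> h e; rewrite -[RHS](impose_self Psi h) /impose.
by apply: eq_bigr => k _; rewrite e.
Qed.

Lemma same_ray_refl (x : 'cV[C]_d) : same_ray x x.
Proof. by exists 1; rewrite normr1 scale1r. Qed.

Lemma same_ray_common (x y z : 'cV[C]_d) :
  same_ray x y -> same_ray x z -> same_ray y z.
Proof.
move=> [a [na ->]] [b [nb ->]].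
have a0 : a != 0 by rewrite -normr_eq0 na oner_eq0.
exists (b / a); split; first by rewrite normrM normfV na nb divr1.
by rewrite scalerA divfK.
Qed.

End Aux.

Theorem mainTheorem11 (C : numClosedFieldType) (d m : nat)
    (A : 'I_m -> 'I_d -> 'cV[C]_d) :
  (0 < m)%N -> (forall j : 'I_m, onbasis (A j)) ->
  (info_complete A <-> no_bifurcation A).
Proof.
move=> m0 hA.
have GammaE : forall Phi Psi, unit_vec Psi ->
   (Gamma A Phi Psi <-> forall j k, `|inner (A j k) Phi| = `|inner (A j k) Psi|).
  move=> Phi Psi u; split.
    by move=> [_ H] j k; apply: impose_fix_mod (H j) k.
  by move=> H; split => // j; apply: impose_mod_fix.
have selfG : forall Phi, unit_vec Phi -> Gamma A Phi Phi.
  by move=> Phi u; split => // j; apply: impose_self.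
split.
- move=> IC Phi Phi' u u'.
  have inG : forall P x, unit_vec P -> Gamma A P x -> same_ray P x.
    move=> P x uP [ux Gx]; apply: IC => //.
    by move/(GammaE P x ux): (conj ux Gx).
  exists (fun _ => Phi'); split; [|split].
  + by move=> _ _; apply: selfG.
  + move=> x y Gx Gy; split => _; first exact: same_ray_refl.
    exact: same_ray_common (inG _ _ u Gx) (inG _ _ u Gy).
  + move=> y Gy; exists Phi; split; first exact: selfG.
    exact: inG.
- move=> NB Phi Psi u v H.
  have [d0|dpos] := posnP d.
    exfalso; move: u; rewrite /unit_vec /inner big1 => [/eqP|i _].
      by rewrite eq_sym oner_eq0.
    by exfalso; case: i => i; rewrite d0.
  pose ord0 : 'I_d := Ordinal dpos.
  pose j0 : 'I_m := Ordinal m0.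
  pose e := A j0 ord0.
  have ue : unit_vec e by rewrite /unit_vec (hA j0) eqxx.
  have [f [f1 [f2 f3]]] := NB Phi e u ue.
  have Ge : forall x, Gamma A e x -> same_ray e x.
    move=> x [ux Gx].
    have md := impose_fix_mod (hA j0) (Gx j0).
    have -> : x = inner e x *: e.
      rewrite [LHS](expand (hA j0)) (bigD1 ord0) //= big1 ?addr0 //.
      move=> k k0; have := md k.
      rewrite (hA j0) (negbTE k0) normr0 => /esym/eqP.
      by rewrite normr_eq0 => /eqP ->; rewrite scale0r.
    exists (inner e x); split => //.
    by rewrite -md (hA j0) eqxx normr1.
  have GPsi : Gamma A Phi Psi by apply/GammaE.
  have GPhi := selfG _ u.
  apply/(f2 _ _ GPhi GPsi).
  exact: same_ray_common (Ge _ (f1 _ GPhi)) (Ge _ (f1 _ GPsi)).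
Qed.
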